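(* Every finite simple graph $G$ can be embedded in any projective plane of order $q$ with $q\ge v(G)(v(G)-1)/2$.
   Context: $v(G)$ is the number of vertices of $G$. A finite projective plane of order $q$ has $q^2+q+1$ points and lines, $q+1$ points on each line and $q+1$ lines through each point; any two distinct points lie on a unique line and any two lines meet in a unique point. An embedding of a simple graph $G=(V,E)$ into a projective plane is an injective map $\phi$ from $V$ to the points such that the induced map sending an edge $ab$ to the line through $\phi(a),\phi(b)$ is injective on $E$. *)

(* Defs.v *)
From mathcomp Require Import all_boot.
Set Implicit Arguments. Unset Strict Implicit. Unset Printing Implicit Defensive.

Definition projective_plane (P L : finType) (inc : P -> L -> bool) (q : nat) : Prop :=
  #|P| = q ^ 2 + q + 1 /\
      #|L| = q ^ 2 + q + 1 /\
      (forall l : L, #|[set p | inc p l]| = q.+1) /\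
      (forall p : P, #|[set l | inc p l]| = q.+1) /\
      (forall p1 p2 : P, p1 != p2 -> exists! l : L, inc p1 l && inc p2 l) /\
      (forall l1 l2 : L, l1 != l2 -> exists! p : P, inc p l1 && inc p l2).

Definition simple_graph (V : finType) (adj : rel V) : Prop :=
  symmetric adj /\ irreflexive adj.

(* phi embeds (V, adj) into the plane: phi is injective on vertices, and the
   map sending an edge ab to the line through phi a, phi b is injective on
   edges.  Since the line through two distinct points is unique, two edges
   have the same image line iff some line contains all four image points. *)
Definition embedding (V P L : finType) (adj : rel V) (inc : P -> L -> bool)
    (phi : V -> P) : Prop :=
  injective phi /\
  (forall a b c d : V, adj a b -> adj c d ->
     forall l : L, inc (phi a) l -> inc (phi b) l -> inc (phi c) l -> inc (phi d) l ->
       (a = c /\ b = d) \/ (a = d /\ b = c)).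

(* Main.v *)
Require Import Defs.
From mathcomp Require Import all_boot.
From mathcomp Require Import zify.
Set Implicit Arguments. Unset Strict Implicit.

Lemma card_bigcup_le (T I : finType) (S : {pred I}) (F : I -> {set T}) :
  #|\bigcup_(i in S) F i| <= \sum_(i in S) #|F i|.
Proof.
elim/big_rec2: _ => [|i A n _ hA]; first by rewrite cards0.
rewrite cardsU.
apply: leq_trans (leq_subr _ _) _; by rewrite leq_add2l.
Qed.

Definition arc (P L : finType) (inc : P -> L -> bool) (s : seq P) :=
  forall x y z, x \in s -> y \in s -> z \in s -> x != y -> y != z -> x != z ->
  forall l, inc x l -> inc y l -> inc z l -> False.

Lemma arc_ex (P L : finType) (inc : P -> L -> bool) (q : nat) :
  projective_plane inc q -> forall k, k * (k - 1) %/ 2 <= q ->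
  exists s : seq P, [/\ size s = k, uniq s, arc inc s &
    exists S : {set L}, #|S| <= k * (k - 1) %/ 2 /\
      forall x y, x \in s -> y \in s -> x != y -> exists2 l, l \in S & inc x l && inc y l].
Proof.
rewrite /projective_plane => -[cP [cL [cl [cp [ul up]]]]].
have /card_gt0P [l0 _] : 0 < #|L| by rewrite cL addn1.
elim=> [|k IH] hk.
  exists [::]; split => //; try by move=> x y z.
  by exists set0; split; rewrite ?cards0.
have ek : k.+1 * (k.+1 - 1) %/ 2 = k * (k - 1) %/ 2 + k.
  have -> : k.+1 * (k.+1 - 1) = k * (k - 1) + k * 2 by case: k {IH hk} => // k; nia.
  by rewrite divnDMl.
have hk' : k * (k - 1) %/ 2 <= q by move: hk; rewrite ek; lia.
have [s [ss us ars [S [cS cov]]]] := IH hk'.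
set m := k * (k - 1) %/ 2.
pose B := [set p | p \in s] :|: \bigcup_(l in S) [set p | inc p l].
have cB : #|B| < #|P|.
  rewrite cP; apply: (leq_ltn_trans (leq_card_setU _ _).1).
  have h1 : #|[set p | p \in s]| <= k by rewrite -ss cardsE card_size.
  have h2 : #|\bigcup_(l in S) [set p | inc p l]| <= m * q.+1.
    apply: leq_trans (card_bigcup_le _ _) _.
    under eq_bigr => l _ do rewrite cl.
    by rewrite sum_nat_const leq_mul2r cS orbT.
  have : m + k <= q by move: hk; rewrite ek.
  nia.
have /card_gt0P [p pB] : 0 < #|~: B|.
  by rewrite cardsCs setCK; move: cB; lia.
move: pB; rewrite !inE negb_or => /andP [ps /bigcupP nS].
have K : forall y z, y \in s -> z \in s -> y != z -> forall l, inc p l -> inc y l -> inc z l -> False.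
  move=> y z ys zs yz l pl yl zl.
  have [l' l'S /andP [yl' zl']] := cov y z ys zs yz.
  have [l1 [_ u1]] := ul y z yz.
  have e1 := u1 l (introT andP (conj yl zl)).
  have e2 := u1 l' (introT andP (conj yl' zl')).
  apply: nS; exists l' => //; rewrite inE -e2 e1 //.
have pick_ok : forall y, y \in s -> let l := odflt l0 [pick l | inc p l && inc y l] in inc p l && inc y l.
  move=> y ys /=; have py : p != y by apply: contraNneq ps => ->.
  have [l1 [h1 _]] := ul p y py.
  case: pickP => [l' //|none]; by rewrite none in h1.
exists (p :: s); split => //=.
- by rewrite ss.
- by rewrite ps us.
- move=> x y z; rewrite !inE => /predU1P[->|xs] /predU1P[->|ys] /predU1P[->|zs];
    rewrite ?eqxx // => xy yz xz l xl yl zl.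
  + by apply: (K y z ys zs yz l).
  + by apply: (K x z xs zs xz l).
  + by apply: (K x y xs ys xy l).
  + by apply: (ars x y z xs ys zs xy yz xz l).
- exists (S :|: [set odflt l0 [pick l | inc p l && inc y l] | y in s]); split.
  + rewrite ek; apply: leq_trans (leq_card_setU _ _).1 _; apply: leq_add => //.
    apply: leq_trans (leq_imset_card _ _) _.
    by rewrite -ss card_size.
  + move=> x y; rewrite !inE => /predU1P[->|xs] /predU1P[->|ys]; rewrite ?eqxx // => xy.
    * exists (odflt l0 [pick l | inc p l && inc y l]); first by apply/setUP; right; apply: imset_f.
      exact: pick_ok.
    * exists (odflt l0 [pick l | inc p l && inc x l]); first by apply/setUP; right; apply: imset_f.
      by rewrite andbC; exact: pick_ok.
    * have [l lS hl] := cov x y xs ys xy; exists l => //; by rewrite inE lS.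
Qed.

Theorem corollary2p16 (V : finType) (adj : rel V)
    (P L : finType) (inc : P -> L -> bool) (q : nat) :
  simple_graph adj ->
  projective_plane inc q ->
  #|V| * (#|V| - 1) %/ 2 <= q ->
  exists phi : V -> P, embedding adj inc phi.
Proof.
move=> [_ irr] pp hq.
have [s [ss us ars _]] := arc_ex pp hq.
have /card_gt0P [p0 _] : 0 < #|P| by case: pp => ->; rewrite addn1.
pose phi := fun v : V => nth p0 s (enum_rank v).
have phis : forall v, phi v \in s by move=> v; rewrite mem_nth // ss.
have phinj : injective phi.
  move=> u v /eqP; rewrite /phi nth_uniq ?ss // => /eqP /val_inj /enum_rank_inj.
  done.
exists phi; rewrite /embedding; split => // a b c d ab cd l al bl cl dl.
have neq : forall x y, x != y -> phi x != phi y by move=> x y; apply: contra => /eqP /phinj ->.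
have anb : a != b by apply: contraTneq ab => ->; rewrite irr.
have cnd : c != d by apply: contraTneq cd => ->; rewrite irr.
have inab : forall z, inc (phi z) l -> z = a \/ z = b.
  move=> z zl; case: (eqVneq z a) => [->|za]; first by left.
  case: (eqVneq z b) => [->|zb]; first by right.
  exfalso; apply: (ars (phi a) (phi b) (phi z) (phis a) (phis b) (phis z)
    (neq _ _ anb) _ _ l al bl zl).
  - by apply: neq; rewrite eq_sym.
  - by apply: neq; rewrite eq_sym.
case: (inab c cl) => ec; case: (inab d dl) => ed; subst; auto; by move: cnd; rewrite eqxx.
Qed.
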